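(* Let $r\ge 3$, $n\ge1$, and let $f:\mathbb{Z}_r^n\to\mathbb{C}$ satisfy $f^{>1}\equiv 0$. Suppose $\|d(f,\{0,1\})\|_2^2\le\epsilon'$, $\|f^{=1}\|_2^2<10^4\epsilon'$, and $\epsilon'<\frac{2}{10^8 r}$. Then $\|f^{=1}\|_2^2<2\epsilon'$.
   Context: $\mathbb{Z}_r^n$ carries the uniform probability measure $\mu$; for $f:\mathbb{Z}_r^n\to\mathbb{C}$, $\|f\|_2^2=\int|f|^2\,d\mu$. For $S\in\mathbb{Z}_r^n$, $u_S(T)=\exp\big(2\pi i\sum_{k=1}^n S_kT_k/r\big)$; these form an orthonormal basis, and $\widehat f(S)=\int f(T)\overline{u_S(T)}\,\mu(dT)$, so $f=\sum_S\widehat f(S)u_S$. Let $|S|=|\{k:S_k\ne0\}|$, $f^{=k}=\sum_{|S|=k}\widehat f(S)u_S$, $f^{>k}=\sum_{|S|>k}\widehat f(S)u_S$. For $z\in\mathbb{C}$, $d(z,\{0,1\})=\min(|z|,|z-1|)$, and $d(f,\{0,1\})$ denotes the function $x\mapsto d(f(x),\{0,1\})$. *)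

(* Defs.v *)
From mathcomp Require Import all_boot all_order all_algebra.
From mathcomp Require Import all_classical all_reals all_analysis.
From mathcomp Require Export complex.
Set Implicit Arguments. Unset Strict Implicit. Unset Printing Implicit Defensive.
Import Order.TTheory GRing.Theory Num.Theory.
Local Open Scope ring_scope.

(* The group Z_r^n: functions 'I_n -> 'I_r (coordinate k in {0,..,r-1}). *)
Definition cube (r n : nat) : finType := {ffun 'I_n -> 'I_r}.

Definition mean (K : fieldType) (r n : nat) (g : cube r n -> K) : K :=
  (r ^ n)%:R^-1 * \sum_(T : cube r n) g T.

Definition omega (R : realType) (r : nat) : R[i] :=
  (cos (2 * pi / r%:R) +i* sin (2 * pi / r%:R))%C.

Definition u (R : realType) (r n : nat) (S T : cube r n) : R[i] :=
  omega R r ^+ (\sum_(k < n) (S k : nat) * (T k : nat))%N.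

Definition fhat (R : realType) (r n : nat) (f : cube r n -> R[i]) (S : cube r n)
  : R[i] := mean (fun T => f T * (@u R r n S T)^*).

Definition wt (r n : nat) (S : cube r n) : nat := #|[set k | (S k : nat) != 0%N]|.

Definition fpart (R : realType) (r n : nat) (f : cube r n -> R[i])
  (P : nat -> bool) (T : cube r n) : R[i] :=
  \sum_(S : cube r n | P (wt S)) @fhat R r n f S * @u R r n S T.

Definition feq (R : realType) (r n : nat) (f : cube r n -> R[i]) (k : nat) :=
  @fpart R r n f (fun m => (m == k)%N).
Definition fgt (R : realType) (r n : nat) (f : cube r n -> R[i]) (k : nat) :=
  @fpart R r n f (fun m => (k < m)%N).

Definition norm2sq (R : realType) (r n : nat) (g : cube r n -> R[i]) : R :=
  mean (fun T => Normc.normc (g T) ^+ 2).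

Definition norm2sqR (R : realType) (r n : nat) (h : cube r n -> R) : R :=
  mean (fun T => h T ^+ 2).

Definition d01 (R : realType) (z : R[i]) : R := Num.min (Normc.normc z) (Normc.normc (z - 1)).

(* Main.v *)
Require Import Defs.
From mathcomp Require Import all_boot all_order all_algebra.
From mathcomp Require Import all_classical all_reals all_analysis.
From mathcomp Require Import complex.
From mathcomp Require Import ring lra zify.
Import Order.TTheory GRing.Theory Num.Theory.
Local Open Scope ring_scope.


Lemma omegaX (R : realType) (r m : nat) :
  omega R r ^+ m = (cos (m%:R * (2 * pi / r%:R)) +i* sin (m%:R * (2 * pi / r%:R)))%C.
Proof.
elim: m => [|m IH]; first by rewrite expr0 mul0r cos0 sin0.
rewrite exprS IH /omega.
set t := 2 * pi / r%:R.
have -> : m.+1%:R * t = t + m%:R * t by rewrite -addn1 natrD mulrDl mul1r addrC.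
rewrite cosD sinD /=. congr (_ +i* _)%C; ring.
Qed.

Lemma omega_r (R : realType) (r : nat) : (0 < r)%N -> omega R r ^+ r = 1.
Proof.
move=> r0; rewrite omegaX.
have -> : r%:R * (2 * pi / r%:R) = pi *+ 2 :> R.
  rewrite mulr2n; field; by rewrite pnatr_eq0 -lt0n.
by rewrite cos2pi sin2pi.
Qed.

Lemma omega_neq1 (R : realType) (r s : nat) : (0 < s < r)%N -> omega R r ^+ s != 1.
Proof.
case/andP=> s0 sr; rewrite omegaX; apply/negP => /eqP [] hc _.
set t := s%:R * (2 * pi / r%:R) : R in hc.
have ht : t = (s%:R * pi / r%:R) *+ 2 by rewrite /t mulr2n; field; rewrite pnatr_eq0 -lt0n (ltn_trans s0 sr).
have rpos : (0 : R) < r%:R by rewrite ltr0n (ltn_trans s0 sr).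
have hs : 0 < sin (s%:R * pi / r%:R : R).
  apply: sin_gt0_pi; apply/andP; split.
    by rewrite divr_gt0 // mulr_gt0 ?ltr0n // pi_gt0.
  rewrite ltr_pdivrMr // mulrC ltr_pM2l ?pi_gt0 // ltr_nat //.
move: hc; rewrite ht cos_mulr2n cos2sin2 => h.
have : sin (s%:R * pi / r%:R : R) ^+ 2 = 0 by move: h; rewrite mulr2n; lra.
by move/eqP; rewrite sqrf_eq0 => /eqP hz; move: hs; rewrite hz ltxx.
Qed.

Lemma omegaXmod (R : realType) (r m : nat) : (0 < r)%N ->
  omega R r ^+ m = omega R r ^+ (m %% r).
Proof.
move=> r0; rewrite {1}(divn_eq m r) exprD mulnC exprM omega_r // expr1n mul1r //.
Qed.

Lemma omegaX_eq1 (R : realType) (r m : nat) : (0 < r)%N ->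
  (omega R r ^+ m == 1) = (r %| m)%N.
Proof.
move=> r0; rewrite omegaXmod // /dvdn.
case: (eqVneq (m %% r)%N 0%N) => [->|h]; first by rewrite expr0 eqxx.
apply/negbTE/omega_neq1; rewrite lt0n h ltn_mod //.
Qed.

Lemma omega_conj (R : realType) (r : nat) : conjc (omega R r) * omega R r = 1.
Proof.
rewrite /omega /=. set t := (2 * pi / r%:R : R).
apply/eqP; rewrite eq_complex /=; apply/andP; split; apply/eqP.
  have := cos2Dsin2 t; lra.
ring.
Qed.

Lemma omegaXconj (R : realType) (r m : nat) : (0 < r)%N ->
  conjc (omega R r ^+ m) = omega R r ^+ ((r.-1) * m).
Proof.
move=> r0; rewrite rmorphXn exprM; congr (_ ^+ _).
have h := omega_conj R r.
have : omega R r ^+ r.-1 * omega R r = 1.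
  by rewrite -exprSr prednK // omega_r.
rewrite -h => /mulIf -> //.
apply/negP => /eqP h0; move: h; rewrite h0 mulr0 => /eqP; rewrite eq_sym oner_eq0.
done.
Qed.

Lemma geom_sum (R : realType) (r s : nat) : (0 < r)%N ->
  \sum_(x < r) omega R r ^+ (s * x) = if (r %| s)%N then r%:R else 0.
Proof.
move=> r0; case: ifP => hs.
  rewrite (eq_bigr (fun _ => 1)) ?sumr_const ?card_ord //.
  by move=> x _; apply/eqP; rewrite omegaX_eq1 // dvdn_mulr.
set z := omega R r ^+ s.
have hz : z != 1 by rewrite omegaX_eq1 // hs.
have : (z - 1) * \sum_(x < r) z ^+ x = 0.
  by rewrite -subrX1 /z -exprM mulnC exprM omega_r // expr1n subrr.
move/eqP; rewrite mulf_eq0 subr_eq0 (negbTE hz) /= => /eqP h.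
rewrite (eq_bigr (fun x : 'I_r => z ^+ x)) // => x _; by rewrite /z -exprM.
Qed.

Lemma dvd_lem (r a b : nat) : (a < r)%N -> (b < r)%N ->
  (r %| a + r.-1 * b)%N = (a == b).
Proof.
case: r => [|r'] ha hb; first by lia.
rewrite /=.
case: (leqP b a) => hab.
  have -> : (a + r' * b = (a - b) + r'.+1 * b)%N by rewrite mulSn; lia.
  rewrite dvdn_addl ?dvdn_mulr //.
  apply/idP/idP; last by move/eqP->; rewrite subnn dvdn0.
  case: (posnP (a - b)) => [h0 _|hp /(dvdn_leq hp) ]; lia.
have -> : (a + r' * b = (a + r'.+1 - b) + r'.+1 * b.-1)%N.
  case: b hb hab => [|b'] hb hab; first by lia.
  rewrite /= mulnS !mulSn; lia.
rewrite dvdn_addl ?dvdn_mulr //.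
have hp : (0 < a + r'.+1 - b)%N by lia.
apply/idP/idP => [/(dvdn_leq hp)|]; lia.
Qed.

Lemma u_conj_mul (R : realType) (r n : nat) (S T T' : cube r n) : (0 < r)%N ->
  u R S T * conjc (u R S T') =
  \prod_(k < n) omega R r ^+ ((T k + r.-1 * T' k) * S k).
Proof.
move=> r0; rewrite /u omegaXconj // -exprD.
rewrite -(big_morph _ (exprD _) (expr0 _)); congr (_ ^+ _).
rewrite big_distrr -big_split /=; apply: eq_bigr => k _.
rewrite mulnDl; lia.
Qed.

Lemma ortho (R : realType) (r n : nat) (T T' : cube r n) : (0 < r)%N ->
  \sum_(S : cube r n) u R S T * conjc (u R S T') = if T == T' then (r ^ n)%:R else 0.
Proof.
move=> r0.
rewrite (eq_bigr _ (fun S _ => @u_conj_mul R r n S T T' r0)).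
rewrite /cube -(bigA_distr_bigA (fun (k : 'I_n) (s : 'I_r) => omega R r ^+ ((T k + r.-1 * T' k) * s))) /=.
rewrite (eq_bigr (fun k => if T k == T' k then r%:R else 0)); last first.
  move=> k _; rewrite (eq_bigr (fun s : 'I_r => omega R r ^+ ((T k + r.-1 * T' k) * s))) //.
  by rewrite geom_sum // dvd_lem.
case: eqP => [->|hne].
  by rewrite (eq_bigr (fun _ => r%:R)) ?prodr_const ?card_ord ?natrX // => k _; rewrite eqxx.
have [k hk] : exists k, T k != T' k.
  apply/existsP; apply: contra_notT hne => /existsPn h; apply/ffunP => k.
  by apply/eqP; move: (h k); rewrite negbK.
by rewrite (bigD1 k) //= (negbTE hk) mul0r.
Qed.

Lemma inversion (R : realType) (r n : nat) (f : cube r n -> R[i]) (T : cube r n) : (0 < r)%N ->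
  \sum_(S : cube r n) fhat f S * u R S T = f T.
Proof.
move=> r0; rewrite /fhat /mean.
under eq_bigr => S _ do rewrite -mulrA big_distrl /=.
rewrite -big_distrr /= exchange_big /=.
have h : forall T', \sum_(S : cube r n) f T' * conjc (u R S T') * u R S T = f T' * (if T == T' then (r ^ n)%:R else 0).
  move=> T'; rewrite -ortho // big_distrr /=; apply: eq_bigr => S _; rewrite mulrAC mulrA //.
under eq_bigr => T' _ do rewrite h.
rewrite (bigD1 T) //= eqxx big1 ?addr0; last by move=> T' /negbTE; rewrite eq_sym => ->; rewrite mulr0.
rewrite mulrCA mulVf ?mulr1 // pnatr_eq0 expn_eq0; lia.
Qed.

Lemma decomp (R : realType) (r n : nat) (f : cube r n -> R[i]) : (0 < r)%N ->
  (forall T, fgt f 1 T = 0) -> exists c, forall T, f T = c + feq f 1 T.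
Proof.
move=> r0 hgt.
pose S0 : cube r n := [ffun _ => Ordinal r0].
exists (fhat f S0) => T.
rewrite -(@inversion R r n f T r0) (bigID (fun S => (1 < wt S)%N)) /=.
move: (hgt T); rewrite /fgt /fpart => ->; rewrite add0r.
rewrite (bigID (fun S => wt S == 1%N)) /= addrC /feq /fpart; congr (_ + _); last first.
  apply: eq_bigl => S; case: (wt S) => [|[|m]] //.
rewrite (bigD1 S0) /=; last first.
  have -> : wt S0 = 0%N.
    by apply/eqP; rewrite /wt cards_eq0; apply/eqP/setP => k; rewrite !inE ffunE.
  done.
rewrite big1 ?addr0.
  rewrite /u (eq_bigr (fun _ => 0%N)) ?big_const_nat ?expr0 ?mulr1 //.
    by rewrite sum_nat_const muln0 expr0 mulr1.
  by move=> k _; rewrite ffunE.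
move=> S /andP [/andP [h1 h2] hS].
have hw : wt S = 0%N by move: h1 h2; case: (wt S) => [|[|m]].
exfalso; move/eqP: hS; apply; apply/ffunP => k; rewrite ffunE; apply/val_inj => /=.
move: hw; rewrite /wt => /eqP; rewrite cards_eq0 => /eqP /setP /(_ k).
by rewrite !inE => /negbFE /eqP.
Qed.

Definition gk (R : realType) (r n : nat) (f : cube r n -> R[i]) (k : 'I_n) (x : 'I_r) : R[i] :=
  \sum_(S : cube r n | (wt S == 1%N) && ((S k : nat) != 0%N)) fhat f S * omega R r ^+ (S k * x).
Arguments gk {R r n}.

Lemma gk_sum0 (R : realType) (r n : nat) (f : cube r n -> R[i]) k : (0 < r)%N ->
  \sum_(x : 'I_r) gk f k x = 0.
Proof.
move=> r0; rewrite /gk exchange_big /= big1 // => S /andP [_ hS].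
rewrite -big_distrr /= geom_sum //.
case: ifP => [/(dvdn_leq _)|]; last by rewrite mulr0.
by rewrite lt0n hS => /(_ isT); rewrite leqNgt ltn_ord.
Qed.

Lemma feq1_split (R : realType) (r n : nat) (f : cube r n -> R[i]) T :
  feq f 1 T = \sum_(k < n) gk f k (T k).
Proof.
rewrite /feq /fpart /gk.
under [RHS]eq_bigr => k _ do rewrite big_mkcond /=.
rewrite exchange_big /= big_mkcond /=; apply: eq_bigr => S _.
case: eqP => hw /=; last by rewrite big1.
have /cards1P [k0 hk0] : #|[set k | (S k : nat) != 0%N]| == 1%N by apply/eqP.
have hk : forall k, ((S k : nat) != 0%N) = (k == k0).
  by move=> k; move/setP: hk0 => /(_ k); rewrite !inE.
rewrite (bigD1 k0) //= big1 ?addr0; last by move=> k /negbTE hk'; rewrite hk hk'.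
rewrite hk eqxx /u; congr (_ * _ ^+ _).
rewrite (bigD1 k0) //= big1 ?addn0 // => k /negbTE hk'.
by move: (hk k); rewrite hk' => /negbFE /eqP ->.
Qed.

Definition sw (r : nat) (x y z : 'I_r) : 'I_r := if z == x then y else if z == y then x else z.
Arguments sw {r}.
Definition shT (r n : nat) (k : 'I_n) (x y : 'I_r) (T : cube r n) : cube r n :=
  [ffun j => if j == k then sw x y (T j) else T j].

Arguments shT {r n}.
Lemma swK (r : nat) (x y : 'I_r) : involutive (sw x y).
Proof.
move=> z; rewrite /sw; case: (eqVneq z x) => [->|hx].
  by rewrite eqxx; case: eqVneq.
case: (eqVneq z y) => [->|hy]; first by rewrite eqxx.
by rewrite (negbTE hx) (negbTE hy).
Qed.

Arguments swK {r}.
Lemma shTK (r n : nat) k (x y : 'I_r) : involutive (@shT r n k x y).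
Proof.
move=> T; apply/ffunP => j; rewrite !ffunE; case: eqP => // ->; by rewrite swK.
Qed.

Lemma part_sum (R : realFieldType) (r n : nat) (k : 'I_n) (F : cube r n -> R) (x y : 'I_r) :
  (forall T T' : cube r n, (forall j, j != k -> T j = T' j) -> F T = F T') ->
  \sum_(T : cube r n | T k == x) F T = \sum_(T : cube r n | T k == y) F T.
Proof.
move=> hF.
rewrite (reindex_inj (inv_inj (@shTK r n k x y))) /=.
apply: eq_big => T.
  rewrite /shT ffunE eqxx /sw; case: (eqVneq (T k) x) => [->|hx]; first by rewrite eq_sym.
  case: (eqVneq (T k) y) => [_|hy]; first by rewrite eqxx.
  by rewrite (negbTE hx).
move=> _; apply: hF => j hj; rewrite /shT ffunE (negbTE hj) //.
Qed.

Lemma indep (R : realFieldType) (r n : nat) (k : 'I_n) (F : cube r n -> R) (G : 'I_r -> R) :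
  (0 < r)%N -> (forall T T' : cube r n, (forall j, j != k -> T j = T' j) -> F T = F T') ->
  \sum_(T : cube r n) F T * G (T k) = r%:R^-1 * (\sum_(T : cube r n) F T) * (\sum_(x : 'I_r) G x).
Proof.
move=> r0 hF.
pose x0 : 'I_r := Ordinal r0.
have hW : forall x, \sum_(T : cube r n | T k == x) F T = r%:R^-1 * \sum_(T : cube r n) F T.
  move=> x.
  rewrite [in RHS](partition_big (fun T : cube r n => T k) xpredT) //=.
  rewrite [in RHS](eq_bigr (fun _ => \sum_(T : cube r n | T k == x) F T)); last first.
    move=> y _; rewrite -(@part_sum R r n k F y x hF); exact: eq_bigl.
  rewrite sumr_const card_ord; set W := \sum_(T | _) _; rewrite -mulr_natl; field; rewrite pnatr_eq0; lia.
rewrite (partition_big (fun T : cube r n => T k) xpredT) //= big_distrr /=.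
apply: eq_bigr => x _.
rewrite (eq_bigr (fun T => F T * G x)); last by move=> T /eqP ->.
by rewrite -big_distrl /= hW mulrC.
Qed.

Definition ex (R : realFieldType) (r : nat) (G : 'I_r -> R) : R := r%:R^-1 * \sum_(x : 'I_r) G x.
Definition Am (R : realFieldType) (r n : nat) (ga : 'I_n -> 'I_r -> R) (m : nat) (T : cube r n) : R :=
  \sum_(k < n | (k < m)%N) ga k (T k).
Arguments ex {R r}.
Arguments Am {R r n}.

Lemma Am_step (R : realFieldType) (r n : nat) (ga : 'I_n -> 'I_r -> R) (m : nat) (h : (m < n)%N) T :
  Am ga m.+1 T = Am ga m T + ga (Ordinal h) (T (Ordinal h)).
Proof.
rewrite /Am (bigD1 (Ordinal h)) //= addrC; congr (_ + _); apply: eq_bigl => k.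
rewrite -val_eqE /= ltnS; case: ltngtP => //.
Qed.

Lemma Am_inv (R : realFieldType) (r n : nat) (ga : 'I_n -> 'I_r -> R) (m : nat) (h : (m < n)%N) (T T' : cube r n) :
  (forall j, j != Ordinal h -> T j = T' j) -> Am ga m T = Am ga m T'.
Proof.
move=> hT; apply: eq_bigr => k hk; rewrite hT //.
by rewrite -val_eqE /= neq_ltn hk.
Qed.

Lemma Am_full (R : realFieldType) (r n : nat) (ga : 'I_n -> 'I_r -> R) T :
  Am ga n T = \sum_(k < n) ga k (T k).
Proof. by apply: eq_bigl => k; rewrite ltn_ord. Qed.

Lemma Am0 (R : realFieldType) (r n : nat) (ga : 'I_n -> 'I_r -> R) T : Am ga 0 T = 0.
Proof. by rewrite /Am big_pred0. Qed.

Lemma meanD (R : realFieldType) (r n : nat) (F G : cube r n -> R) :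
  mean (fun T => F T + G T) = mean F + mean G.
Proof. by rewrite /mean big_split mulrDr. Qed.

Lemma meanZ (R : realFieldType) (r n : nat) (c : R) (F : cube r n -> R) :
  mean (fun T => c * F T) = c * mean F.
Proof. by rewrite /mean -big_distrr /= mulrCA. Qed.

Lemma mean_le (R : realFieldType) (r n : nat) (F G : cube r n -> R) :
  (forall T, F T <= G T) -> mean F <= mean G.
Proof.
move=> h; rewrite /mean ler_wpM2l ?invr_ge0 ?ler0n //; exact: ler_sum.
Qed.

Lemma mean_ext (R : realFieldType) (r n : nat) (F G : cube r n -> R) :
  (forall T, F T = G T) -> mean F = mean G.
Proof. by move=> h; rewrite /mean (eq_bigr _ (fun T _ => h T)). Qed.

Arguments mean_ext {R r n F G}.
Arguments mean_le {R r n F G}.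
Lemma meanM (R : realFieldType) (r n : nat) (k : 'I_n) (F : cube r n -> R) (G : 'I_r -> R) :
  (0 < r)%N -> (forall T T' : cube r n, (forall j, j != k -> T j = T' j) -> F T = F T') ->
  mean (fun T => F T * G (T k)) = mean F * ex G.
Proof.
move=> r0 hF; rewrite /mean /ex (@indep R r n k F G r0 hF); ring.
Qed.

Arguments meanM {R r n k F G}.
Lemma mean_cst (R : realFieldType) (r n : nat) (c : R) : (0 < r)%N ->
  mean (fun _ : cube r n => c) = c.
Proof.
move=> r0; rewrite /mean sumr_const card_ffun !card_ord -mulr_natl; field; rewrite pnatr_eq0 expn_eq0; lia.
Qed.

Definition qf (R : realFieldType) (r n : nat) (ga gb : 'I_n -> 'I_r -> R) (k : 'I_n) (x : 'I_r) : R :=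
  ga k x ^+ 2 + gb k x ^+ 2.
Arguments qf {R r n}.

Lemma sumlt_step (R : realFieldType) (n m : nat) (h : (m < n)%N) (X : 'I_n -> R) :
  \sum_(k < n | (k < m.+1)%N) X k = \sum_(k < n | (k < m)%N) X k + X (Ordinal h).
Proof.
rewrite (bigD1 (Ordinal h)) //= addrC; congr (_ + _); apply: eq_bigl => k.
rewrite -val_eqE /= ltnS; case: ltngtP => //.
Qed.

Lemma ex_ge0 (R : realFieldType) (r : nat) (G : 'I_r -> R) : (forall x, 0 <= G x) -> 0 <= ex G.
Proof. move=> h; rewrite /ex mulr_ge0 ?invr_ge0 ?ler0n ?sumr_ge0 //. Qed.

Lemma pt_bound (R : realFieldType) (a b c d : R) :
  ((a + c) ^+ 2 + (b + d) ^+ 2) ^+ 2 <=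
  (a ^+ 2 + b ^+ 2) ^+ 2 + 6 * ((a ^+ 2 + b ^+ 2) * (c ^+ 2 + d ^+ 2)) + (c ^+ 2 + d ^+ 2) ^+ 2
  + 4 * ((a ^+ 2 + b ^+ 2) * a * c) + 4 * ((a ^+ 2 + b ^+ 2) * b * d)
  + 4 * (a * (c * (c ^+ 2 + d ^+ 2))) + 4 * (b * (d * (c ^+ 2 + d ^+ 2))).
Proof.
have h : 0 <= (a * d - b * c) ^+ 2 by apply: sqr_ge0.
nra.
Qed.

Lemma moments (R : realFieldType) (r n : nat) (ga gb : 'I_n -> 'I_r -> R) :
  (0 < r)%N -> (forall k, \sum_x ga k x = 0) -> (forall k, \sum_x gb k x = 0) ->
  forall m, (m <= n)%N ->
  [/\ mean (Am ga m) = 0, mean (Am gb m) = 0,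
      mean (fun T => Am ga m T ^+ 2 + Am gb m T ^+ 2) = \sum_(k < n | (k < m)%N) ex (qf ga gb k)
    & mean (fun T => (Am ga m T ^+ 2 + Am gb m T ^+ 2) ^+ 2) <=
      6 * (\sum_(k < n | (k < m)%N) ex (qf ga gb k)) ^+ 2
      + \sum_(k < n | (k < m)%N) ex (fun x => qf ga gb k x ^+ 2)].
Proof.
move=> r0 ha hb; elim=> [_|m IH hm].
  rewrite !big_pred0 // (mean_ext (G := fun _ => 0)) ?mean_cst //; last by move=> T; rewrite Am0.
  rewrite (mean_ext (G := fun _ => 0)) ?mean_cst //; last by move=> T; rewrite Am0.
  rewrite (mean_ext (G := fun _ => 0)) ?mean_cst //; last by move=> T; rewrite !Am0; rewrite expr0n /= addr0.
  rewrite (mean_ext (G := fun _ => 0)) ?mean_cst //; last by move=> T; rewrite !Am0 expr0n /= addr0 expr0n.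
have h : (m < n)%N by [].
case: (IH (ltnW hm)) => mA mB mP mP2.
set k0 := Ordinal h.
have hinv : forall T T' : cube r n, (forall j, j != k0 -> T j = T' j) ->
    Am ga m T = Am ga m T' /\ Am gb m T = Am gb m T'.
  by move=> T T' hT; split; apply: (@Am_inv R r n _ m h).
have ex0a : ex (ga k0) = 0 by rewrite /ex ha mulr0.
have ex0b : ex (gb k0) = 0 by rewrite /ex hb mulr0.
have mean1 : forall G : 'I_r -> R, mean (fun T : cube r n => 1 * G (T k0)) = ex G.
  by move=> G; rewrite (meanM (F := fun _ => 1)) ?mean_cst ?mul1r.
rewrite !(@sumlt_step R n m h).
set s := \sum_(k < n | (k < m)%N) ex (qf ga gb k) in mP mP2 *.
set e := ex (qf ga gb k0).
have s0 : 0 <= s by apply: sumr_ge0 => k _; apply: ex_ge0 => x; rewrite /qf addr_ge0 ?sqr_ge0.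
have e0 : 0 <= e by apply: ex_ge0 => x; rewrite /qf addr_ge0 ?sqr_ge0.
pose P := fun T => Am ga m T ^+ 2 + Am gb m T ^+ 2.
have mP' : mean P = s by [].
have PE : forall T, P T = Am ga m T ^+ 2 + Am gb m T ^+ 2 by [].
have hP : forall T T' : cube r n, (forall j, j != k0 -> T j = T' j) -> P T = P T'.
  by move=> T T' /hinv [e1 e2]; rewrite !PE e1 e2.
clearbody P.
split.
- rewrite (mean_ext (G := fun T => Am ga m T + 1 * ga k0 (T k0))); last first.
    by move=> T; rewrite (@Am_step R r n _ m h) mul1r.
  by rewrite meanD mA mean1 ex0a addr0.
- rewrite (mean_ext (G := fun T => Am gb m T + 1 * gb k0 (T k0))); last first.
    by move=> T; rewrite (@Am_step R r n _ m h) mul1r.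
  by rewrite meanD mB mean1 ex0b addr0.
- rewrite (mean_ext (G := fun T => P T + (2 * (Am ga m T * ga k0 (T k0))
      + (2 * (Am gb m T * gb k0 (T k0)) + 1 * qf ga gb k0 (T k0))))); last first.
    by move=> T; rewrite !(@Am_step R r n _ m h) PE /qf; ring.
  rewrite !meanD mean1 !meanZ mP' (meanM (F := Am ga m)) ?(meanM (F := Am gb m)) ?ex0a ?ex0b; first by rewrite !mulr0 add0r add0r.
  all: try (exact: r0); try (by move=> T T' /hinv []).
- have hle := @mean_le R r n (fun T => (Am ga m.+1 T ^+ 2 + Am gb m.+1 T ^+ 2) ^+ 2) (fun T => P T ^+ 2 + (6 * (P T * qf ga gb k0 (T k0)) + (1 * qf ga gb k0 (T k0) ^+ 2
      + (4 * (P T * Am ga m T * ga k0 (T k0)) + (4 * (P T * Am gb m T * gb k0 (T k0))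
      + (4 * (Am ga m T * (ga k0 (T k0) * qf ga gb k0 (T k0))) + 4 * (Am gb m T * (gb k0 (T k0) * qf ga gb k0 (T k0))))))))).
  apply: (le_trans (hle _)).
    move=> T; rewrite !(@Am_step R r n _ m h) PE /qf mul1r; move: (@pt_bound R (Am ga m T) (Am gb m T) (ga k0 (T k0)) (gb k0 (T k0))).
    by rewrite !addrA.
  rewrite !meanD !meanZ.
  have i1 : forall T T' : cube r n, (forall j, j != k0 -> T j = T' j) -> P T * Am ga m T = P T' * Am ga m T'.
    by move=> T T' hT; have [e1 e2] := hinv T T' hT; rewrite (hP T T' hT) e1.
  have i2 : forall T T' : cube r n, (forall j, j != k0 -> T j = T' j) -> P T * Am gb m T = P T' * Am gb m T'.
    by move=> T T' hT; have [e1 e2] := hinv T T' hT; rewrite (hP T T' hT) e2.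
  have i3 : forall T T' : cube r n, (forall j, j != k0 -> T j = T' j) -> Am ga m T = Am ga m T'.
    by move=> T T' /hinv [].
  have i4 : forall T T' : cube r n, (forall j, j != k0 -> T j = T' j) -> Am gb m T = Am gb m T'.
    by move=> T T' /hinv [].
  rewrite (meanM (G := qf ga gb k0) r0 hP).
  rewrite (meanM (G := ga k0) r0 i1).
  rewrite (meanM (G := gb k0) r0 i2).
  rewrite (meanM (G := fun x => ga k0 x * qf ga gb k0 x) r0 i3).
  rewrite (meanM (G := fun x => gb k0 x * qf ga gb k0 x) r0 i4).
  have mq : mean (fun T : cube r n => qf ga gb k0 (T k0) ^+ 2) = ex (fun x => qf ga gb k0 x ^+ 2).
    by rewrite -mean1; apply: mean_ext => T; rewrite mul1r.
  rewrite mq mul1r mA mB ex0a ex0b mP'.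
  rewrite ?mulr0 ?mul0r ?mulr0 ?addr0 -/e -/k0.
  have hP2 : mean (fun T => P T ^+ 2) = mean (fun T => (Am ga m T ^+ 2 + Am gb m T ^+ 2) ^+ 2).
    by apply: mean_ext => T; rewrite PE.
  rewrite hP2.
  move: mP2; set t := \sum_(k < n | (k < m)%N) _ => mP2.
  set u1 := mean _ in mP2 *.
  set u2 := ex _.
  have : 6 * (s * e) <= 6 * (s + e) ^+ 2 - 6 * s ^+ 2 by nra.
  move=> h6; lra.
Qed.

Notation cRe := complex.Re.
Notation cIm := complex.Im.

Lemma ReD (R : realType) (x y : R[i]) : cRe (x + y) = cRe x + cRe y. Proof. by case: x; case: y. Qed.
Lemma ImD (R : realType) (x y : R[i]) : cIm (x + y) = cIm x + cIm y. Proof. by case: x; case: y. Qed.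
Lemma ReB (R : realType) (x y : R[i]) : cRe (x - y) = cRe x - cRe y. Proof. by case: x; case: y. Qed.
Lemma ImB (R : realType) (x y : R[i]) : cIm (x - y) = cIm x - cIm y. Proof. by case: x; case: y. Qed.

Lemma Re_sum (R : realType) (I : finType) (F : I -> R[i]) : cRe (\sum_i F i) = \sum_i cRe (F i).
Proof. by apply: (big_rec2 (fun x y => cRe y = x)) => // i x y _ <-; rewrite ReD. Qed.
Lemma Im_sum (R : realType) (I : finType) (F : I -> R[i]) : cIm (\sum_i F i) = \sum_i cIm (F i).
Proof. by apply: (big_rec2 (fun x y => cIm y = x)) => // i x y _ <-; rewrite ImD. Qed.

Definition sq (R : realType) (z : R[i]) : R := cRe z ^+ 2 + cIm z ^+ 2.
Arguments sq {R}.

Lemma normc_sq (R : realType) (z : R[i]) : Normc.normc z ^+ 2 = sq z.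
Proof. by case: z => a b; rewrite /= sqr_sqrtr // addr_ge0 ?sqr_ge0. Qed.

Lemma d01_facts (R : realType) (z : R[i]) :
  [/\ d01 z ^+ 2 <= sq z, d01 z ^+ 2 <= sq (z - 1) & d01 z ^+ 2 = sq z \/ d01 z ^+ 2 = sq (z - 1)].
Proof.
rewrite /d01 -!normc_sq.
have h0 : 0 <= Normc.normc z by case: z => a b; rewrite /= sqrtr_ge0.
have h1 : 0 <= Normc.normc (z - 1) by case: (z - 1) => a b; rewrite /= sqrtr_ge0.
case: (leP (Normc.normc z) (Normc.normc (z - 1))) => h.
  split; [exact: lexx | rewrite ler_pXn2r ?nnegrE // | by left].
split; [rewrite ler_pXn2r ?nnegrE // ltW // | exact: lexx | by right].
Qed.

Lemma sq_sum_le (R : realFieldType) (I : finType) (P : pred I) (F : I -> R) :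
  (forall i, 0 <= F i) -> \sum_(i | P i) F i ^+ 2 <= (\sum_(i | P i) F i) ^+ 2.
Proof.
move=> hF.
suff : 0 <= \sum_(i | P i) F i /\ \sum_(i | P i) F i ^+ 2 <= (\sum_(i | P i) F i) ^+ 2 by case.
apply: (big_rec2 (fun x y => 0 <= y /\ x <= y ^+ 2)); first by rewrite expr0n /= lexx.
move=> i x y _ [hy hxy]; split; first by rewrite addr_ge0.
have := hF i; nra.
Qed.

Lemma arith (R : realFieldType) (K rho e s A M : R) :
  1000 <= K -> 3 <= rho -> 0 <= s -> 0 <= A -> s < K * e -> e * (K * K * rho) < 2 ->
  A <= 2 * e + 2 * s -> M <= (6 + rho) * s ^+ 2 -> A + s - 32 * A ^+ 2 - 32 * M <= e -> s < 2 * e.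
Proof.
move=> hK hr hs hA hse he hAs hM hmain.
have K0 : 0 <= K by lra.
have r0 : 0 <= rho by lra.
have e1 : 0 < e.
  case: (ltrP 0 e) => // hneg; have : K * e <= 0 by rewrite mulr_ge0_le0.
  lra.
have e0 : 0 <= e by apply: ltW.
have h1 : rho * s <= rho * (K * e) by rewrite ler_wpM2l // ltW.
have h2 : rho * s * K <= rho * (K * e) * K by rewrite ler_wpM2r.
have h3 : rho * s * 1000 <= rho * s * K by rewrite ler_wpM2l // mulr_ge0.
have hy : rho * s * 1000 < 2 by lra.
have k1 : (0:R) <= 1000 by rewrite ler0n.
have re0 : 0 <= rho * e by apply: mulr_ge0.
have h4 : rho * e * K * 1000 <= rho * e * K * K by apply: ler_wpM2l; [apply: mulr_ge0|].
have h5 : rho * e * 1000 * 1000 <= rho * e * K * 1000 by apply: ler_wpM2r => //; apply: ler_wpM2l.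
have hrA : rho * A <= rho * (2 * e + 2 * s) by rewrite ler_wpM2l.
have hA3 : 3 * A <= rho * A by rewrite ler_wpM2r.
have hA1 : A <= 1 / 500 by lra.
have hA2 : A * A <= 1 / 500 * A by rewrite ler_wpM2r.
have h6 : (6 + rho) * s ^+ 2 <= 3 * rho * s ^+ 2 by rewrite ler_wpM2r ?sqr_ge0 //; lra.
have h7 : rho * s * s <= 1 / 500 * s by rewrite ler_wpM2r //; lra.
have hs2 : s ^+ 2 = s * s by rewrite expr2.
have hA2' : A ^+ 2 = A * A by rewrite expr2.
rewrite hs2 in h6; rewrite hA2' in hmain.
lra.
Qed.


Lemma lowpt (R : realFieldType) (x y sg : R) : sg ^+ 2 = 1 ->
  (x ^+ 2 + y ^+ 2) - 4 * (x ^+ 2 + y ^+ 2) ^+ 2 <= (x - sg) ^+ 2 + y ^+ 2.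
Proof.
move=> hs.
have h1 : 0 <= (2 * x ^+ 2 - 1 / 2) ^+ 2 by apply: sqr_ge0.
have h2 : 0 <= (x - sg / 2) ^+ 2 by apply: sqr_ge0.
have h3 : x ^+ 4 <= (x ^+ 2 + y ^+ 2) ^+ 2.
  have : x ^+ 2 <= x ^+ 2 + y ^+ 2 by rewrite lerDl sqr_ge0.
  have e4 : x ^+ 4 = (x ^+ 2) ^+ 2 by rewrite -exprM.
  by move=> h; rewrite e4 ler_pXn2r ?nnegrE ?sqr_ge0 ?addr_ge0 ?sqr_ge0.
nra.
Qed.

Lemma sq2 (R : realFieldType) (a b c d : R) : ((a + c) ^+ 2 + (b + d) ^+ 2) ^+ 2 <= 8 * (a ^+ 2 + b ^+ 2) ^+ 2 + 8 * (c ^+ 2 + d ^+ 2) ^+ 2.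
Proof.
have h1 : (a + c) ^+ 2 + (b + d) ^+ 2 <= 2 * (a ^+ 2 + b ^+ 2) + 2 * (c ^+ 2 + d ^+ 2).
  have : 0 <= (a - c) ^+ 2 + (b - d) ^+ 2 by rewrite addr_ge0 ?sqr_ge0.
  nra.
have h0 : 0 <= (a + c) ^+ 2 + (b + d) ^+ 2 by rewrite addr_ge0 ?sqr_ge0.
have hA : 0 <= a ^+ 2 + b ^+ 2 by rewrite addr_ge0 ?sqr_ge0.
have hC : 0 <= c ^+ 2 + d ^+ 2 by rewrite addr_ge0 ?sqr_ge0.
have : 0 <= (a ^+ 2 + b ^+ 2 - (c ^+ 2 + d ^+ 2)) ^+ 2 by apply: sqr_ge0.
nra.
Qed.

Theorem lemma3p2 (R : realType) (r n : nat) (f : cube r n -> R[i]) (eps' : R) :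
  (3 <= r)%N -> (1 <= n)%N ->
  (forall T, fgt f 1 T = 0) ->
  norm2sqR (fun T => d01 (f T)) <= eps' ->
  norm2sq (feq f 1) < 10 ^+ 4 * eps' ->
  eps' < 2 / (10 ^+ 8 * r%:R) ->
  norm2sq (feq f 1) < 2 * eps'.
Proof.
move=> hr hn hgt hd hs he.
have r0 : (0 < r)%N by lia.
have [c hc] := @decomp R r n f r0 hgt.
pose ga := fun k x => cRe (gk f k x).
pose gb := fun k x => cIm (gk f k x).
have ha : forall k, \sum_x ga k x = 0 by move=> k; rewrite /ga -Re_sum gk_sum0.
have hb : forall k, \sum_x gb k x = 0 by move=> k; rewrite /gb -Im_sum gk_sum0.
have hYr : forall T, cRe (feq f 1 T) = Am ga n T by move=> T; rewrite feq1_split Re_sum Am_full.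
have hYi : forall T, cIm (feq f 1 T) = Am gb n T by move=> T; rewrite feq1_split Im_sum Am_full.
have [mA mB mP mP2] := @moments R r n ga gb r0 ha hb n (leqnn n).
set s := \sum_(k < n | (k < n)%N) ex (qf ga gb k) in mP mP2.
have hns : norm2sq (feq f 1) = s.
  by rewrite -mP; apply: mean_ext => T; rewrite normc_sq /sq hYr hYi.
rewrite hns in hs *.
have hq0 : forall k x, 0 <= qf ga gb k x by move=> k x; rewrite /qf addr_ge0 ?sqr_ge0.
have s0 : 0 <= s by apply: sumr_ge0 => k _; apply: ex_ge0.
have rR0 : (0 : R) < r%:R by rewrite ltr0n.
have hq : forall k, ex (fun x => qf ga gb k x ^+ 2) <= r%:R * ex (qf ga gb k) ^+ 2.
  move=> k; rewrite /ex.
  have h := @sq_sum_le R _ xpredT (qf ga gb k) (hq0 k).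
  have -> : r%:R * (r%:R^-1 * \sum_x qf ga gb k x) ^+ 2 = r%:R^-1 * (\sum_x qf ga gb k x) ^+ 2.
    by field; rewrite pnatr_eq0 -lt0n.
  by rewrite ler_wpM2l // invr_ge0 ltW.
have hM : mean (fun T => (Am ga n T ^+ 2 + Am gb n T ^+ 2) ^+ 2) <= (6 + r%:R) * s ^+ 2.
  apply: (le_trans mP2).
  have : \sum_(k < n | (k < n)%N) ex (fun x => qf ga gb k x ^+ 2) <= r%:R * s ^+ 2.
    apply: (le_trans (ler_sum _ (fun k _ => hq k))).
    rewrite -big_distrr /=; apply: ler_wpM2l; first exact: ltW rR0.
    exact: (@sq_sum_le R _ (fun k : 'I_n => (k < n)%N) (fun k => ex (qf ga gb k)) (fun k => @ex_ge0 R r _ (hq0 k))).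
  move=> h; rewrite mulrDl; lra.
set M := mean _ in hM.
have [b0 [hb0 hDc]] : exists b0 : R[i], (b0 = 0 \/ b0 = 1) /\ d01 c ^+ 2 = sq (c - b0).
  have [_ _ [e|e]] := @d01_facts R c; [exists 0; rewrite subr0 | exists 1]; split => //; by [left|right].
pose al := cRe (c - b0); pose be := cIm (c - b0).
have hX : forall T, cRe (f T - b0) = al + Am ga n T /\ cIm (f T - b0) = be + Am gb n T.
  move=> T; rewrite -hYr -hYi /al /be -ReD -ImD; split; congr (_ _); rewrite hc; ring.
have Re1 : cRe (1 : R[i]) = 1 by [].
have Im1 : cIm (1 : R[i]) = 0 by [].
have sqB : forall z w : R[i], sq (z - w) <= 2 * sq z + 2 * sq w.
  move=> z w; rewrite /sq ReB ImB.
  have := sqr_ge0 (cRe z + cRe w); have := sqr_ge0 (cIm z + cIm w); nra.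
have hup : forall T, d01 c ^+ 2 <= 2 * d01 (f T) ^+ 2 + 2 * (Am ga n T ^+ 2 + Am gb n T ^+ 2).
  move=> T; have [_ _ h3] := @d01_facts R (f T); have [hc1 hc2 _] := @d01_facts R c.
  have hY : sq (feq f 1 T) = Am ga n T ^+ 2 + Am gb n T ^+ 2 by rewrite /sq hYr hYi.
  case: h3 => ->.
    apply: (le_trans hc1); rewrite -hY.
    have -> : c = f T - feq f 1 T by rewrite hc; ring.
    exact: sqB.
  apply: (le_trans hc2); rewrite -hY.
  have -> : c - 1 = (f T - 1) - feq f 1 T by rewrite hc; ring.
  exact: sqB.
have hAs : d01 c ^+ 2 <= 2 * eps' + 2 * s.
  have := mean_le hup; rewrite mean_cst // meanD !meanZ mP => h.
  have : 2 * mean (fun T => d01 (f T) ^+ 2) <= 2 * eps' by rewrite ler_wpM2l.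
  lra.
set Aa := d01 c ^+ 2 in hAs.
have hAa : Aa = al ^+ 2 + be ^+ 2 by rewrite /Aa hDc.
have Aa0 : 0 <= Aa by rewrite hAa addr_ge0 ?sqr_ge0.
have hlow : forall T, Aa + (2 * al * Am ga n T + (2 * be * Am gb n T + ((Am ga n T ^+ 2 + Am gb n T ^+ 2)
      + (- (32 * Aa ^+ 2) + (- 32) * (Am ga n T ^+ 2 + Am gb n T ^+ 2) ^+ 2)))) <= d01 (f T) ^+ 2.
  move=> T; have [h1 h2 h3] := @d01_facts R (f T).
  have [ex ey] := hX T.
  set x := cRe (f T - b0) in ex; set y := cIm (f T - b0) in ey.
  have hp : (x ^+ 2 + y ^+ 2) - 4 * (x ^+ 2 + y ^+ 2) ^+ 2 <= d01 (f T) ^+ 2.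
    case: hb0 => hb0; rewrite hb0 in x y ex ey *.
      have ex' : cRe (f T) = x by rewrite /x subr0.
      have ey' : cIm (f T) = y by rewrite /y subr0.
      case: h3 => ->; rewrite /sq ?ReB ?ImB ?ex' ?ey' ?Re1 ?Im1.
        have := sqr_ge0 (x ^+ 2 + y ^+ 2); lra.
      by rewrite subr0; apply: lowpt; rewrite expr1n.
    have ex' : cRe (f T) = x + 1 by rewrite /x ReB Re1; ring.
    have ey' : cIm (f T) = y by rewrite /y ImB Im1 subr0.
    case: h3 => ->; rewrite /sq ?ReB ?ImB -/x -/y ?ex' ?ey'.
      have -> : x + 1 = x - (-1) by ring.
      by apply: lowpt; rewrite sqrrN expr1n.
    rewrite Re1 Im1 addrK subr0; have := sqr_ge0 (x ^+ 2 + y ^+ 2); lra.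
  apply: le_trans hp; rewrite ex ey.
  have := @sq2 R al be (Am ga n T) (Am gb n T).
  rewrite -hAa; nra.
pose PP := fun T => Am ga n T ^+ 2 + Am gb n T ^+ 2.
have PPE : forall T, PP T = Am ga n T ^+ 2 + Am gb n T ^+ 2 by [].
have mPP : mean PP = s by [].
have mPP2 : mean (fun T => PP T ^+ 2) = M by [].
have hlow' : forall T, Aa + (2 * al * Am ga n T + (2 * be * Am gb n T + (PP T
      + (- (32 * Aa ^+ 2) + (- 32) * PP T ^+ 2)))) <= d01 (f T) ^+ 2 by move=> T; rewrite PPE; apply: hlow.
clearbody PP.
have hmain : Aa + s - 32 * Aa ^+ 2 - 32 * M <= eps'.
  have := mean_le hlow'; rewrite !meanD mean_cst // !meanZ mean_cst // mA mB mPP mPP2 => h.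
  have := le_trans h hd; rewrite !mulr0 !add0r; lra.
have hK : (1000 : R) <= 10 ^+ 4 by rewrite -natrX ler_nat.
have hr3 : (3 : R) <= r%:R by rewrite ler_nat.
have he' : eps' * (10 ^+ 4 * 10 ^+ 4 * r%:R) < 2.
  rewrite -exprD -ltr_pdivlMr //; apply: mulr_gt0 => //; exact: exprn_gt0.
exact: (@arith R (10 ^+ 4) r%:R eps' s Aa M hK hr3 s0 Aa0 hs he' hAs hM hmain).
Qed.
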